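(* Let $Q$ be a right Leibniz algebra, $L$ a subalgebra of $Q$, and $q\in Q$. (1) If $Q$ is an algebra of quotients of $L$, then $(L:q)$ is an essential ideal of $L$ and $\mathrm{Ann}_L((L:q))=\{0\}$. (2) If $Q$ is ideally absorbed into $L$, then $(L:q)$ is an essential ideal of $L$ and $\mathrm{Ann}_L((L:q))=\{0\}$.
   Context: A right Leibniz algebra satisfies $[x,[y,z]]=[[x,y],z]-[[x,z],y]$. Ideals: subspaces $I$ with $[I,L]\subseteq I$, $[L,I]\subseteq I$; an ideal is essential if it meets every nonzero ideal nontrivially. $\mathrm{Ann}_L(H)=\{x\in L:[x,y]=[y,x]=0\ \forall y\in H\}$. For $x\in L$, $R_x(u)=[u,x]$, $L_x(u)=[x,u]$ on $Q$, $\mathscr{A}(L)$ the associative algebra they generate, ${}_L(q)=\mathbb{F}q+\{\sum\xi_i(q):\xi_i\in\mathscr{A}(L)\}$, $(L:q)=\{x\in L:[x,{}_L(q)]\subseteq L,[{}_L(q),x]\subseteq L\}$. $Q$ is an algebra of quotients of $L$ if for all $p,q\in Q$, $p\ne0$, there is $x\in(L:q)$ with $[x,p]\ne0$ or $y\in(L:q)$ with $[p,y]\ne0$. $Q$ is ideally absorbed into $L$ if for each $0\ne q\in Q$ there is an ideal $I$ of $L$ with $\mathrm{Ann}_L(I)=\{0\}$ such that $[I,q]\ne\{0\}$ or $[q,I]\ne\{0\}$, and both $[I,q],[q,I]\subseteq L$. *)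

(* Defs.v *)
From HB Require Import structures.
From mathcomp Require Import all_boot all_algebra.
Set Implicit Arguments. Unset Strict Implicit. Unset Printing Implicit Defensive.
Import GRing.Theory.
Local Open Scope ring_scope.

Section Leibniz.
Variables (F : fieldType) (Q : lmodType F) (br : Q -> Q -> Q).

Definition bilinear_bracket : Prop :=
  (forall (a : F) (u v w : Q), br (a *: u + v) w = a *: br u w + br v w) /\
  (forall (a : F) (u v w : Q), br w (a *: u + v) = a *: br w u + br w v).

Definition right_Leibniz_identity : Prop :=
  forall x y z : Q, br x (br y z) = br (br x y) z - br (br x z) y.

Definition right_Leibniz_algebra : Prop :=
  bilinear_bracket /\ right_Leibniz_identity.

Definition is_subspace (S : Q -> Prop) : Prop :=
  S 0 /\ (forall u v, S u -> S v -> S (u + v)) /\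
  (forall (a : F) u, S u -> S (a *: u)).

Definition is_subalgebra (L : Q -> Prop) : Prop :=
  is_subspace L /\ (forall x y, L x -> L y -> L (br x y)).

Definition is_ideal (L I : Q -> Prop) : Prop :=
  is_subspace I /\ (forall x, I x -> L x) /\
  (forall x y, I x -> L y -> I (br x y)) /\
  (forall x y, I x -> L y -> I (br y x)).

Definition is_essential_ideal (L I : Q -> Prop) : Prop :=
  is_ideal L I /\
  forall J, is_ideal L J -> (exists x, J x /\ x <> 0) ->
    exists x, I x /\ J x /\ x <> 0.

Definition Ann (L H : Q -> Prop) : Q -> Prop :=
  fun x => L x /\ forall y, H y -> br x y = 0 /\ br y x = 0.

Definition Ann_trivial (L H : Q -> Prop) : Prop :=
  forall x, Ann L H x <-> x = 0.

(* A(L): the associative algebra of maps Q -> Q generated by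
   R_x (u |-> [u,x]) and L_x (u |-> [x,u]) for x in L. *)
Inductive mult_alg (L : Q -> Prop) : (Q -> Q) -> Prop :=
  | ma_R x : L x -> mult_alg L (fun u => br u x)
  | ma_L x : L x -> mult_alg L (fun u => br x u)
  | ma_zero : mult_alg L (fun _ => 0)
  | ma_add f g : mult_alg L f -> mult_alg L g -> mult_alg L (fun u => f u + g u)
  | ma_scale (a : F) f : mult_alg L f -> mult_alg L (fun u => a *: f u)
  | ma_comp f g : mult_alg L f -> mult_alg L g -> mult_alg L (fun u => f (g u)).

Definition sub_gen (L : Q -> Prop) (q : Q) : Q -> Prop :=
  fun u => exists (a : F) (xis : seq (Q -> Q)),
    (forall i, (i < size xis)%N -> mult_alg L (nth (fun _ => 0) xis i)) /\
    u = a *: q + \sum_(xi <- xis) xi q.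

Definition colon (L : Q -> Prop) (q : Q) : Q -> Prop :=
  fun x => L x /\ forall u, sub_gen L q u -> L (br x u) /\ L (br u x).

Definition algebra_of_quotients (L : Q -> Prop) : Prop :=
  forall p q : Q, p <> 0 ->
    (exists x, colon L q x /\ br x p <> 0) \/
    (exists y, colon L q y /\ br p y <> 0).

Definition ideally_absorbed (L : Q -> Prop) : Prop :=
  forall q : Q, q <> 0 ->
    exists I, is_ideal L I /\ Ann_trivial L I /\
      ((exists x, I x /\ br x q <> 0) \/ (exists x, I x /\ br q x <> 0)) /\
      (forall x, I x -> L (br x q)) /\ (forall x, I x -> L (br q x)).

End Leibniz.

(* Main.v *)
Require Import Defs.
From mathcomp Require Import all_boot all_algebra.
From Stdlib Require Import Classical.
Set Implicit Arguments. Unset Strict Implicit. Unset Printing Implicit Defensive.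
Import GRing.Theory.
Local Open Scope ring_scope.

Section Aux.
Variables (F : fieldType) (Q : lmodType F) (br : Q -> Q -> Q).
Hypothesis HB : bilinear_bracket br.
Hypothesis HJ : right_Leibniz_identity br.
Variable L : Q -> Prop.
Hypothesis HL : is_subalgebra br L.

Lemma brDl u v w : br (u + v) w = br u w + br v w.
Proof. by have := (proj1 HB) 1 u v w; rewrite !scale1r. Qed.
Lemma brDr u v w : br w (u + v) = br w u + br w v.
Proof. by have := (proj2 HB) 1 u v w; rewrite !scale1r. Qed.
Lemma br0l w : br 0 w = 0.
Proof.
have := brDl 0 0 w; rewrite addr0 => /eqP; rewrite -subr_eq0.
by rewrite opprD addrA subrr sub0r oppr_eq0 => /eqP.
Qed.
Lemma br0r w : br w 0 = 0.
Proof.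
have := brDr 0 0 w; rewrite addr0 => /eqP; rewrite -subr_eq0.
by rewrite opprD addrA subrr sub0r oppr_eq0 => /eqP.
Qed.
Lemma brZl a u w : br (a *: u) w = a *: br u w.
Proof. by have := (proj1 HB) a u 0 w; rewrite !addr0 br0l addr0. Qed.
Lemma brZr a u w : br w (a *: u) = a *: br w u.
Proof. by have := (proj2 HB) a u 0 w; rewrite !addr0 br0r addr0. Qed.

Lemma L0 : L 0.
Proof. by case: HL => [[]]. Qed.
Lemma LD u v : L u -> L v -> L (u + v).
Proof. by case: HL => [[_ []]] => H _ _; apply: H. Qed.
Lemma LZ a u : L u -> L (a *: u).
Proof. by case: HL => [[_ []]] => _ H _; apply: H. Qed.
Lemma LB u v : L u -> L v -> L (u - v).
Proof. move=> Hu Hv; apply: LD => //; rewrite -scaleN1r; exact: LZ. Qed.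
Lemma Lbr u v : L u -> L v -> L (br u v).
Proof. by case: HL => _; apply. Qed.

Lemma sub_gen_iff q u : sub_gen br L q u <->
  exists a f, mult_alg br L f /\ u = a *: q + f q.
Proof.
split.
- case=> a [xis [Hx ->]]; exists a.
  suff [f [Hf Ef]] : exists f, mult_alg br L f /\ \sum_(xi <- xis) xi q = f q.
    by exists f; rewrite Ef.
  elim: xis Hx => [|g xis IH] Hx.
    by exists (fun _ => 0); split; [constructor | rewrite big_nil].
  have [f [Hf Ef]] := IH (fun i Hi => Hx i.+1 Hi).
  exists (fun w => g w + f w); split.
    apply: ma_add => //; exact: (Hx 0%N).
  by rewrite big_cons Ef.
- case=> a [f [Hf ->]]; exists a, [:: f]; split.
    by case=> [|i] //= _.
  by rewrite big_cons big_nil addr0.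
Qed.

Lemma sub_gen_R q u y : sub_gen br L q u -> L y -> sub_gen br L q (br u y).
Proof.
move=> /sub_gen_iff [a [f [Hf ->]]] Hy; apply/sub_gen_iff.
exists 0, (fun w => a *: br w y + br (f w) y); split.
  apply: ma_add; first by apply: ma_scale; exact: ma_R.
  by apply: (ma_comp (f := fun u => br u y)) => //; exact: ma_R.
by rewrite scale0r add0r brDl brZl.
Qed.

Lemma sub_gen_L q u y : sub_gen br L q u -> L y -> sub_gen br L q (br y u).
Proof.
move=> /sub_gen_iff [a [f [Hf ->]]] Hy; apply/sub_gen_iff.
exists 0, (fun w => a *: br y w + br y (f w)); split.
  apply: ma_add; first by apply: ma_scale; exact: ma_L.
  by apply: (ma_comp (f := fun u => br y u)) => //; exact: ma_L.
by rewrite scale0r add0r brDr brZr.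
Qed.

Lemma colon_ideal q : is_ideal br L (colon br L q).
Proof.
split; [split; [|split] | split; [|split]].
- split; first exact: L0.
  by move=> u _; rewrite br0l br0r; split; exact: L0.
- move=> u v [Lu Hu] [Lv Hv]; split; first exact: LD.
  move=> w Hw; have [? ?] := Hu w Hw; have [? ?] := Hv w Hw.
  by rewrite brDl brDr; split; apply: LD.
- move=> a u [Lu Hu]; split; first exact: LZ.
  move=> w Hw; have [? ?] := Hu w Hw.
  by rewrite brZl brZr; split; apply: LZ.
- by move=> x [].
- move=> x y [Lx Hx] Ly; split; first exact: Lbr.
  move=> u Hu; split.
  + have -> : br (br x y) u = br x (br y u) + br (br x u) y.
      by rewrite HJ subrK.
    apply: LD; first by apply: (proj1 (Hx _ (sub_gen_L Hu Ly))).
    by apply: Lbr => //; exact: (proj1 (Hx _ Hu)).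
  + rewrite HJ; apply: LB.
      by apply: Lbr => //; exact: (proj2 (Hx _ Hu)).
    exact: (proj2 (Hx _ (sub_gen_R Hu Ly))).
- move=> x y [Lx Hx] Ly; split; first exact: Lbr.
  move=> u Hu; split.
  + have -> : br (br y x) u = br y (br x u) + br (br y u) x.
      by rewrite HJ subrK.
    apply: LD; first by apply: Lbr => //; exact: (proj1 (Hx _ Hu)).
    exact: (proj2 (Hx _ (sub_gen_L Hu Ly))).
  + rewrite HJ; apply: LB.
      exact: (proj2 (Hx _ (sub_gen_R Hu Ly))).
    by apply: Lbr => //; exact: (proj2 (Hx _ Hu)).
Qed.

Lemma ann0 H : Ann br L H 0.
Proof. by split; [exact: L0 | move=> y _; rewrite br0l br0r]. Qed.

Lemma ann_ess I : is_ideal br L I -> Ann_trivial br L I ->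
  is_essential_ideal br L I.
Proof.
move=> HI HA; split => // J HJd [x [Jx nx]].
have [_ [IL [I1 I2]]] := HI.
have [_ [JL [J1 J2]]] := HJd.
have : ~ Ann br L I x by move=> /HA.
move=> nA; apply: NNPP => Hn; apply: nA; split; first exact: JL.
move=> y Iy; split.
- apply: NNPP => Hne; apply: Hn; exists (br x y); split; last split => //.
    exact: (I2 y x Iy (JL x Jx)).
  exact: (J1 x y Jx (IL y Iy)).
- apply: NNPP => Hne; apply: Hn; exists (br y x); split; last split => //.
    exact: (I1 y x Iy (JL x Jx)).
  exact: (J2 x y Jx (IL y Iy)).
Qed.

Lemma absorb I q : is_ideal br L I ->
  (forall x, I x -> L (br x q) /\ L (br q x)) ->
  forall x, I x -> colon br L q x.
Proof.
move=> [_ [IL [I1 I2]]] Hq x Ix; split; first exact: IL.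
pose P u := forall x, I x -> L (br x u) /\ L (br u x).
have PR : forall u y, P u -> L y -> P (br u y).
  move=> u y Pu Ly z Iz; split.
  - rewrite HJ; apply: LB; first by apply: Lbr => //; exact: (proj1 (Pu _ Iz)).
    exact: (proj1 (Pu _ (I1 _ _ Iz Ly))).
  - have -> : br (br u y) z = br u (br y z) + br (br u z) y.
      by rewrite HJ subrK.
    apply: LD; first exact: (proj2 (Pu _ (I2 _ _ Iz Ly))).
    by apply: Lbr => //; exact: (proj2 (Pu _ Iz)).
have PL : forall u y, P u -> L y -> P (br y u).
  move=> u y Pu Ly z Iz; split.
  - rewrite HJ; apply: LB; first exact: (proj1 (Pu _ (I1 _ _ Iz Ly))).
    by apply: Lbr => //; exact: (proj1 (Pu _ Iz)).
  - have -> : br (br y u) z = br y (br u z) + br (br y z) u.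
      by rewrite HJ subrK.
    apply: LD; first by apply: Lbr => //; exact: (proj2 (Pu _ Iz)).
    exact: (proj1 (Pu _ (I2 _ _ Iz Ly))).
have P0 : P 0 by move=> z _; rewrite br0l br0r; split; exact: L0.
have PD : forall u v, P u -> P v -> P (u + v).
  move=> u v Pu Pv z Iz; have [? ?] := Pu z Iz; have [? ?] := Pv z Iz.
  by rewrite brDl brDr; split; apply: LD.
have PZ : forall a u, P u -> P (a *: u).
  move=> a u Pu z Iz; have [? ?] := Pu z Iz.
  by rewrite brZl brZr; split; apply: LZ.
have Pf : forall f, mult_alg br L f -> forall u, P u -> P (f u).
  move=> f Hf; induction Hf => u Pu /=; auto.
have Pq : P q by move=> z Iz; exact: Hq.
move=> u /sub_gen_iff [a [f [Hf ->]]].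
have := PD _ _ (PZ a _ Pq) (Pf _ Hf _ Pq) x Ix; done.
Qed.

Lemma L_ideal : is_ideal br L L.
Proof.
split; first by case: HL.
split => //; split => x y Hx Hy; exact: Lbr.
Qed.

End Aux.

Theorem proposition3p8 (F : fieldType) (Q : lmodType F) (br : Q -> Q -> Q)
  (HQ : right_Leibniz_algebra br) (L : Q -> Prop)
  (HL : is_subalgebra br L) (q : Q) :
  (algebra_of_quotients br L ->
     is_essential_ideal br L (colon br L q) /\ Ann_trivial br L (colon br L q)) /\
  (ideally_absorbed br L ->
     is_essential_ideal br L (colon br L q) /\ Ann_trivial br L (colon br L q)).
Proof.
case: HQ => HB HJ.
have Ideal := colon_ideal HB HJ HL q.
suff H : (algebra_of_quotients br L \/ ideally_absorbed br L) ->
    Ann_trivial br L (colon br L q).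
  split => Hx; (have HA : Ann_trivial br L (colon br L q) by apply: H; tauto);
    split => //; exact: ann_ess.
move=> Hcase x; split; last by move=> ->; exact: ann0.
move=> [Lx Hx]; apply: NNPP => nx.
case: Hcase => [AQ | IA].
- case: (AQ x q nx) => [[y [Cy Hy]] | [y [Cy Hy]]].
    by apply: Hy; exact: (proj2 (Hx y Cy)).
  by apply: Hy; exact: (proj1 (Hx y Cy)).
- have sub : forall I, is_ideal br L I ->
      (forall z, I z -> L (br z q)) -> (forall z, I z -> L (br q z)) ->
      forall z, I z -> colon br L q z.
    move=> I HI H1 H2; apply: (absorb HB HJ HL HI) => z Iz; split; auto.
  have [q0 | qn0] := eqVneq q 0.
  + have LC : forall z, L z -> colon br L q z.
      apply: sub; first exact: L_ideal.
        by move=> z _; rewrite q0 (br0r HB); case: HL => [[]].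
      by move=> z _; rewrite q0 (br0l HB); case: HL => [[]].
    have [I [HI [_ [Hne _]]]] := IA x nx.
    have IL : forall z, I z -> L z by case: HI => _ [].
    case: Hne => [[y [Iy Hy]] | [y [Iy Hy]]].
      by apply: Hy; exact: (proj2 (Hx y (LC y (IL y Iy)))).
    by apply: Hy; exact: (proj1 (Hx y (LC y (IL y Iy)))).
  + have [I [HI [HAI [_ [H1 H2]]]]] := IA q (elimN eqP qn0 : q <> 0) .
    apply: nx; apply/HAI; split => // y Iy.
    exact: Hx y (sub I HI H1 H2 y Iy).
Qed.
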